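(* Let $\mathbb{F}$ be a field and $f(x)=(x-a)(x-b)\in\mathbb{F}[x]$ with $a,b\in\mathbb{F}^*$, $a\ne b$. Then every $f$-subgroup (in the multiplicative group of any extension field of $\mathbb{F}$) is one of $\langle a,b\rangle$, $\langle a\rangle$, $\langle b\rangle$. Moreover, if an $f$-subgroup $M$ is different from $\langle a,b\rangle$, then every $f$-sequence presenting $M$ is cyclic, so $M$ is a standard $f$-subgroup. Consequently $\langle a,b\rangle$ is the only possible non-standard $f$-subgroup.
   Context: An $f$-sequence is a two-way infinite sequence $(s_n)_{n\in\mathbb{Z}}$ with $f(\sigma)s=0$, where $(\sigma s)_n=s_{n+1}$ (here: $s_n=(a+b)s_{n-1}-ab\,s_{n-2}$). A sequence $s$ presents a finite multiplicative subgroup $M$ if $s$ has smallest period $|M|$ and $M=\{s_0,\ldots,s_{|M|-1}\}$; $M$ is an $f$-subgroup if some $f$-sequence presents it. A sequence is cyclic if there is $\alpha$ with $s_{n+1}=\alpha s_n$ for all $n$. An $f$-subgroup is standard if every $f$-sequence presenting it is cyclic, and non-standard otherwise. $\langle S\rangle$ is the multiplicative group generated by $S$. *)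

(* Defs.v *)
From HB Require Import structures.
From mathcomp Require Import all_boot all_order all_algebra.
From mathcomp Require Import finmap.
Set Implicit Arguments. Unset Strict Implicit. Unset Printing Implicit Defensive.
Import Order.TTheory GRing.Theory Num.Theory.
Local Open Scope ring_scope.
Local Open Scope fset_scope.

Section Defs.
Variable K : fieldType.

Definition fseq (a b : K) (s : int -> K) : Prop :=
  forall n : int, s n = ((a + b) * s (n - 1) - a * b * s (n - 2))%R.

Definition is_period (s : int -> K) (p : nat) : Prop :=
  forall n : int, s (n + p%:Z)%R = s n.

Definition smallest_period (s : int -> K) (p : nat) : Prop :=
  (0 < p)%N /\ is_period s p /\ (forall q : nat, (0 < q < p)%N -> ~ is_period s q).

Definition finite_mulsubgroup (M : {fset K}) : Prop :=
  1 \in M /\ (forall x, x \in M -> x != 0) /\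
  (forall x y, x \in M -> y \in M -> x * y \in M) /\
  (forall x, x \in M -> x^-1 \in M).

Definition presents (s : int -> K) (M : {fset K}) : Prop :=
  smallest_period s #|` M| /\
  (forall x, x \in M <-> exists2 i : nat, (i < #|` M|)%N & x = s i%:Z).

Definition f_subgroup (a b : K) (M : {fset K}) : Prop :=
  finite_mulsubgroup M /\ exists s, fseq a b s /\ presents s M.

Definition cyclic_seq (s : int -> K) : Prop :=
  exists alpha : K, forall n : int, s (n + 1)%R = alpha * s n.

Definition standard (a b : K) (M : {fset K}) : Prop :=
  f_subgroup a b M /\ forall s, fseq a b s -> presents s M -> cyclic_seq s.

Definition subgroup_pred (P : K -> Prop) : Prop :=
  P 1 /\ (forall x, P x -> x != 0) /\
  (forall x y, P x -> P y -> P (x * y)) /\ (forall x, P x -> P x^-1).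

Definition gen (S : K -> Prop) (x : K) : Prop :=
  forall P, subgroup_pred P -> (forall y, S y -> P y) -> P x.

Definition set_eq (M : {fset K}) (P : K -> Prop) : Prop :=
  forall x, x \in M <-> P x.

End Defs.

(* Main.v *)
Require Import Defs.
From HB Require Import structures.
From mathcomp Require Import all_boot all_order all_algebra.
From mathcomp Require Import finmap zify ring.
Import GRing.Theory.
Set Implicit Arguments. Unset Strict Implicit.
Local Open Scope ring_scope.

Section Aux.
Variable K : fieldType.
Implicit Types (A B : K) (s t : int -> K).

Lemma fseq_shift A B s : fseq A B s -> forall x, s (x + 2) = (A + B) * s (x + 1) - A * B * s x.
Proof.
move=> h x; rewrite h; have -> : x + 2 - 1 = x + 1 by lia.
by have -> : x + 2 - 2 = x by lia.
Qed.

Lemma fseq_uniq A B s t : A != 0 -> B != 0 -> fseq A B s -> fseq A B t ->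
  s 0 = t 0 -> s 1 = t 1 -> forall n, s n = t n.
Proof.
move=> hA hB hs ht e0 e1.
have fw : forall n : nat, s n = t n /\ s (n.+1) = t (n.+1).
  elim=> [|n [h1 h2]]; first by split.
  split => //.
  have -> : Posz n.+2 = Posz n + 2 by lia.
  rewrite (fseq_shift hs) (fseq_shift ht).
  have -> : Posz n + 1 = Posz n.+1 by lia.
  by rewrite h1 h2.
have bw : forall n : nat, s (- Posz n) = t (- Posz n) /\ s (- Posz n + 1) = t (- Posz n + 1).
  elim=> [|n [h1 h2]]; first by split.
  have E : forall u, fseq A B u -> u (- Posz n.+1) =
       ((A + B) * u (- Posz n) - u (- Posz n + 1)) / (A * B).
    move=> u hu; have := fseq_shift hu (- Posz n.+1).
    have -> : - Posz n.+1 + 2 = - Posz n + 1 by lia.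
    have -> : - Posz n.+1 + 1 = - Posz n by lia.
    move=> ->; field; by rewrite ?hA ?hB ?mulf_neq0.
  rewrite (E s hs) (E t ht) h1 h2; split => //.
  by have -> : - Posz n.+1 + 1 = - Posz n by lia.
case=> n; first by case: (fw n).
have -> : Negz n = - Posz n.+1 by lia.
by case: (bw n.+1).
Qed.

Lemma closed_form A B s c d : fseq A B s -> s 0 = c + d -> s 1 = c * A + d * B ->
  forall n : nat, s n = c * A ^+ n + d * B ^+ n.
Proof.
move=> hs e0 e1.
have : forall n : nat, s n = c * A ^+ n + d * B ^+ n /\
   s n.+1 = c * A ^+ n.+1 + d * B ^+ n.+1.
  elim=> [|n [h1 h2]]; first by rewrite !expr0 !expr1 !mulr1.
  split => //.
  have -> : Posz n.+2 = Posz n + 2 by lia.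
  rewrite (fseq_shift hs).
  have -> : Posz n + 1 = Posz n.+1 by lia.
  rewrite h1 h2 !exprS; ring.
by move=> h n; case: (h n).
Qed.

Lemma prod_mulx (H : seq K) x : \prod_(y <- H) (x * y) = x ^+ size H * \prod_(y <- H) y.
Proof.
elim: H => [|y H IH]; first by rewrite !big_nil expr0 mulr1.
by rewrite !big_cons IH /= exprS; ring.
Qed.

Lemma lagrange (H : seq K) x : uniq H -> (forall y, y \in H -> y != 0) -> x != 0 ->
  (forall y, y \in H -> x * y \in H) -> x ^+ size H = 1.
Proof.
move=> uH nz x0 cl.
have um : uniq (map (fun y => x * y) H) by rewrite map_inj_uniq //; exact: mulfI.
have sub : {subset map (fun y => x * y) H <= H}.
  by move=> z /mapP [y yH ->]; exact: cl.
have sz : (size H <= size (map (fun y => (x * y)%R) H))%N by rewrite size_map.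
have [_ eqi] := uniq_min_size um sub sz.
have p : perm_eq (map (fun y => x * y) H) H by apply: uniq_perm.
have e : \prod_(y <- map (fun y => x * y) H) y = \prod_(y <- H) y by rewrite (perm_big _ p).
move: e; rewrite big_map prod_mulx => e.
have P0 : \prod_(y <- H) y != 0.
  by rewrite prodf_seq_neq0; apply/allP => y yH; apply/implyP => _; exact: nz.
by apply: (mulIf P0); rewrite mul1r.
Qed.

Lemma gen_in (S : K -> Prop) x : S x -> gen S x.
Proof. by move=> Sx P _ h; exact: h. Qed.
Lemma gen1 (S : K -> Prop) : gen S 1.
Proof. by move=> P [] . Qed.
Lemma genM (S : K -> Prop) x y : gen S x -> gen S y -> gen S (x * y).
Proof. by move=> hx hy P hP h; case: (hP) => _ [_ [hm _]]; apply: hm; [apply: hx|apply: hy]. Qed.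
Lemma genV (S : K -> Prop) x : gen S x -> gen S x^-1.
Proof. by move=> hx P hP h; case: (hP) => _ [_ [_ hi]]; apply: hi; apply: hx. Qed.
Lemma genX (S : K -> Prop) x n : gen S x -> gen S (x ^+ n).
Proof. move=> hx; elim: n => [|n IH]; first by rewrite expr0; exact: gen1.
by rewrite exprS; apply: genM. Qed.

End Aux.

Section Key.
Variable K : fieldType.
Variables (A B : K) (hA : A != 0) (hB : B != 0) (hAB : A != B).
Variables (M : {fset K}) (hM : finite_mulsubgroup M) (s : int -> K).
Hypotheses (hs : fseq A B s) (hp : presents s M).

Let m := #|` M|.

Lemma m_gt0 : (0 < m)%N.
Proof. by case: hp => [[]]. Qed.

Lemma per : is_period s m.
Proof. by case: hp => [[_ []]]. Qed.

Lemma per_mul q r : s (q * m + r)%N = s r.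
Proof.
elim: q => [|q IH]; first by rewrite mul0n add0n.
have -> : Posz (q.+1 * m + r)%N = Posz (q * m + r)%N + Posz m by lia.
by rewrite per.
Qed.

Lemma in_M (n : nat) : s n \in M.
Proof.
case: hp => _ h; apply/h; exists (n %% m)%N; first by rewrite ltn_pmod // m_gt0.
by rewrite {1}(divn_eq n m) per_mul.
Qed.

Lemma M_nz x : x \in M -> x != 0.
Proof. by case: hM => _ [h _]; exact: h. Qed.

Lemma M_mul x y : x \in M -> y \in M -> x * y \in M.
Proof. by case: hM => _ [_ [h _]]; exact: h. Qed.

Lemma M_inv x : x \in M -> x^-1 \in M.
Proof. by case: hM => _ [_ [_ h]]; exact: h. Qed.

Lemma M_1 : 1 \in M.
Proof. by case: hM. Qed.

Lemma M_exp x n : x \in M -> x ^+ n \in M.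
Proof. move=> hx; elim: n => [|n IH]; first by rewrite expr0 M_1.
by rewrite exprS M_mul. Qed.

Lemma M_elt x : x \in M -> exists2 i : nat, (i < m)%N & x = s i.
Proof. by case: hp => _ h /h. Qed.

Lemma s0_nz : s 0 != 0.
Proof. exact: M_nz (in_M 0). Qed.

Lemma gen_M (S : K -> Prop) x : (forall y, S y -> y \in M) -> gen S x -> x \in M.
Proof. by move=> hS hx; apply: (hx (fun y => y \in M)) => //; exact: hM. Qed.

Lemma Bcase : s 1 = B * s 0 -> cyclic_seq s /\ set_eq M (gen (fun y => y = B)).
Proof.
move=> e1.
have cyc : forall n, s (n + 1) = B * s n.
  apply: (@fseq_uniq _ A B (fun n => s (n + 1)) (fun n => B * s n)) => //.
  - move=> n; rewrite hs; congr (_ * s _ - _ * s _); lia.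
  - by move=> n /=; rewrite {1}hs; ring.
  - have := fseq_shift hs 0; rewrite !add0r => ->.

    by rewrite e1; ring.
split; first by exists B.
have pw : forall n : nat, s n = B ^+ n * s 0.
  elim=> [|n IH]; first by rewrite expr0 mul1r.
  have -> : Posz n.+1 = Posz n + 1 by lia.
  by rewrite cyc IH exprS mulrA.
have BM : B \in M.
  have -> : B = s 1 * (s 0)^-1 by rewrite e1 mulfK // s0_nz.
  by rewrite M_mul ?M_inv ?(in_M 0) ?(in_M 1).
move=> x; split.
  move=> /M_elt [i _ ->].
  have [k _ e] := M_elt M_1.
  have ek : s 0 = (B ^+ k)^-1.
    apply: (mulfI (expf_neq0 k hB)); by rewrite mulfV ?expf_neq0 // -pw -e.
  rewrite pw ek; apply: genM; first by apply: genX; apply: gen_in.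
  by apply: genV; apply: genX; apply: gen_in.
by apply: gen_M => y ->.
Qed.

Lemma ABcase : s 1 != B * s 0 -> s 1 != A * s 0 ->
  set_eq M (gen (fun y => y = A \/ y = B)).
Proof.
move=> nB nA.
have BA : B - A != 0 by rewrite subr_eq0 eq_sym.
set c := (B * s 0 - s 1) / (B - A).
set d := (s 1 - A * s 0) / (B - A).
have c0 : c != 0 by rewrite mulf_neq0 ?invr_eq0 // subr_eq0 eq_sym.
have d0 : d != 0 by rewrite mulf_neq0 ?invr_eq0 // subr_eq0.
have e0 : s 0 = c + d by rewrite /c /d; field.
have e1 : s 1 = c * A + d * B by rewrite /c /d; field.
have cf := closed_form hs e0 e1.
have pm0 : c * A ^+ m + d * B ^+ m = c + d.
  by have := per 0; rewrite add0r (cf m) -e0.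
have pm1 : c * A ^+ m.+1 + d * B ^+ m.+1 = c * A + d * B.
  have := per 1; have -> : (1 + Posz m) = Posz m.+1 by lia.
  by rewrite (cf m.+1) -e1.
have Am : A ^+ m = 1.
  have E : (A - B) * (c * (A ^+ m - 1)) = (c * A ^+ m.+1 + d * B ^+ m.+1 - (c * A + d * B))
     - B * (c * A ^+ m + d * B ^+ m - (c + d)) by rewrite !exprS; ring.
  have : (A - B) * (c * (A ^+ m - 1)) == 0 by rewrite E pm1 pm0 !subrr mulr0 subr0.
  by rewrite mulf_eq0 subr_eq0 (negbTE hAB) /= mulf_eq0 (negbTE c0) /= subr_eq0 => /eqP.
have Bm : B ^+ m = 1.
  have E : (B - A) * (d * (B ^+ m - 1)) = (c * A ^+ m.+1 + d * B ^+ m.+1 - (c * A + d * B))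
     - A * (c * A ^+ m + d * B ^+ m - (c + d)) by rewrite !exprS; ring.
  have : (B - A) * (d * (B ^+ m - 1)) == 0 by rewrite E pm1 pm0 !subrr mulr0 subr0.
  by rewrite mulf_eq0 subr_eq0 eq_sym (negbTE hAB) /= mulf_eq0 (negbTE d0) /= subr_eq0 => /eqP.
have rootsM : forall y, y \in M -> y ^+ m = 1.
  move=> y yM; apply: lagrange; first exact: fset_uniq.
  - by move=> z zM; exact: M_nz.
  - exact: M_nz.
  - by move=> z zM; exact: M_mul.
have inM : forall x, x ^+ m = 1 -> x \in M.
  move=> x hx; apply/negPn/negP => nx.
  have pn0 : ('X^m - 1%:P : {poly K}) != 0 by rewrite -size_poly_eq0 size_XnsubC // m_gt0.
  have := @max_poly_roots _ ('X^m - 1%:P) (x :: enum_fset M) pn0.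
  rewrite size_XnsubC ?m_gt0 // /= ltnn.
  have -> : root ('X^m - 1%:P) x by rewrite rootE !hornerE hx subrr.
  have -> : all (root ('X^m - 1%:P)) (enum_fset M).
    by apply/allP => y yM; rewrite rootE !hornerE rootsM // subrr.
  by rewrite nx fset_uniq => /(_ erefl erefl).
have AM := inM _ Am; have BM := inM _ Bm.
set H := undup [seq A ^+ i * B ^+ j | i <- iota 0 m, j <- iota 0 m].
have memH : forall y, y \in H <-> exists i j, [/\ (i < m)%N, (j < m)%N & y = A ^+ i * B ^+ j].
  move=> y; rewrite mem_undup; split.
    move/allpairsP => [[i j] /= [hi hj ->]]; exists i, j.
    by move: hi hj; rewrite !mem_iota /= !add0n.
  case=> i [j [hi hj ->]]; apply/allpairsP; exists (i, j) => /=.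
  by rewrite !mem_iota /= !add0n hi hj.
have HM : {subset H <= enum_fset M}.
  move=> y /memH [i [j [_ _ ->]]]; apply: M_mul; exact: M_exp.
have Hnz : forall y, y \in H -> y != 0.
  move=> y /memH [i [j [_ _ ->]]]; by rewrite mulf_neq0 // expf_neq0.
have HclA : forall y, y \in H -> A * y \in H.
  move=> y /memH [i [j [hi hj ->]]]; apply/memH; exists (i.+1 %% m)%N, j.
  by rewrite ltn_pmod ?m_gt0 // hj (expr_mod i.+1 Am) exprS mulrA.
have HclB : forall y, y \in H -> B * y \in H.
  move=> y /memH [i [j [hi hj ->]]]; apply/memH; exists i, (j.+1 %% m)%N.
  by rewrite ltn_pmod ?m_gt0 // hi (expr_mod j.+1 Bm) exprS mulrCA.
have Ah : A ^+ size H = 1 by apply: lagrange => //; exact: undup_uniq.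
have Bh : B ^+ size H = 1 by apply: lagrange => //; exact: undup_uniq.
have oneH : 1 \in H by apply/memH; exists 0%N, 0%N; rewrite m_gt0 !expr0 mulr1.
have h0 : (0 < size H)%N.
  by rewrite lt0n size_eq0; apply/eqP => E; rewrite E in oneH.
have perh : is_period s (size H).
  rewrite /is_period; apply: (@fseq_uniq _ A B (fun n => s (n + Posz (size H))) s) => //.
  - move=> k; rewrite hs; congr (_ * s _ - _ * s _); lia.
  - by rewrite /= add0r (cf (size H)) Ah Bh !mulr1 e0.
  - have -> : 1 + Posz (size H) = Posz (size H).+1 by lia.
    by rewrite /= (cf (size H).+1) !exprS Ah Bh !mulr1 e1.
have mh : (m <= size H)%N.
  rewrite leqNgt; apply/negP => hlt; case: hp => [[_ [_ hmin]] _].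
  by apply: (hmin (size H)) => //; rewrite h0 hlt.
have [_ eqi] := uniq_min_size (undup_uniq _) HM mh.
move=> x; split.
  move=> xM; have : x \in H by rewrite eqi.
  move/memH => [i [j [_ _ ->]]]; apply: genM; apply: genX; apply: gen_in; [left|right]; done.
by apply: gen_M => y [->|->].
Qed.

End Key.

Lemma key (K : fieldType) (A B : K) (hA : A != 0) (hB : B != 0) (hAB : A != B)
  (M : {fset K}) (hM : finite_mulsubgroup M) (s : int -> K)
  (hs : fseq A B s) (hp : presents s M) :
  set_eq M (gen (fun y => y = A \/ y = B)) \/
  (cyclic_seq s /\ (set_eq M (gen (fun y => y = A)) \/ set_eq M (gen (fun y => y = B)))).
Proof.
have [eB|nB] := eqVneq (s 1) (B * s 0).
  by have [c g] := Bcase hA hB hAB hM hs hp eB; right; split => //; right.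
have [eA|nA] := eqVneq (s 1) (A * s 0).
  have hs' : fseq B A s by move=> n; rewrite {1}hs; ring.
  have hBA : B != A by rewrite eq_sym.
  by have [c g] := Bcase hB hA hBA hM hs' hp eA; right; split => //; left.
by left; apply: ABcase.
Qed.

Local Open Scope fset_scope.

Theorem mainTheorem5 (F K : fieldType) (iota : {rmorphism F -> K}) (a b : F)
  (ha : a != 0) (hb : b != 0) (hab : a != b) (M : {fset K}) :
  f_subgroup (iota a) (iota b) M ->
  (set_eq M (gen (fun y => y = iota a \/ y = iota b)) \/
   set_eq M (gen (fun y => y = iota a)) \/
   set_eq M (gen (fun y => y = iota b))) /\
  (~ set_eq M (gen (fun y => y = iota a \/ y = iota b)) ->
   standard (iota a) (iota b) M).
Proof.
move=> [hM [s [hs hp]]].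
have hA : iota a != 0 by rewrite fmorph_eq0.
have hB : iota b != 0 by rewrite fmorph_eq0.
have hAB : iota a != iota b by rewrite (inj_eq (fmorph_inj iota)).
split.
  by case: (key hA hB hAB hM hs hp) => [h|[_ h]]; [left|right].
move=> nab; split; first by split => //; exists s.
move=> t ht htp.
by case: (key hA hB hAB hM ht htp) => [h|[h _]].
Qed.
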